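(* Fix $q\ge2$ and $z\in\mathbb Z$, and set $k=\lceil\log_q n\rceil+z$ and $\Delta_n=\log_q n-\lceil\log_q n\rceil$. Then $$\lim_{n\to\infty}\frac{a_q(n,k)}{q^n\,e^{-(q-1)q^{\Delta_n-z-1}}}=1.$$
   Context: $\Sigma_q=\{0,\dots,q-1\}$. A vector in $\Sigma_q^n$ is a $k$-RLL vector if $n<k$ or it contains no run of $k$ consecutive zeros; $a_q(n,k)$ is the number of $k$-RLL vectors in $\Sigma_q^n$. *)

(* Defs.v *)
From Stdlib Require Import Reals ZArith Arith List.
Import ListNotations.
Open Scope R_scope.

Fixpoint words (q n : nat) : list (list nat) :=
  match n with
  | O => [[]]
  | S m => flat_map (fun w => map (fun a => a :: w) (seq 0 q)) (words q m)
  end.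

Definition has_zero_run (k : nat) (w : list nat) : bool :=
  existsb (fun i => forallb (fun j => Nat.eqb (nth (i + j) w 1%nat) 0) (seq 0 k))
          (seq 0 (length w - k + 1)).

Definition is_RLL (k : Z) (w : list nat) : bool :=
  orb (Z.ltb (Z.of_nat (length w)) k) (negb (has_zero_run (Z.to_nat k) w)).

Definition a_q (q n : nat) (k : Z) : nat :=
  length (filter (is_RLL k) (words q n)).

Definition Rceil (x : R) : Z := (- (up (- x) - 1))%Z.

Definition logq (q : nat) (x : R) : R := ln x / ln (INR q).

(* Main.v *)
Require Import Defs.
From Stdlib Require Import Reals ZArith Arith List Lia Lra.
Import ListNotations.
Local Open Scope bool_scope.
Local Open Scope nat_scope.

Definition cnt (q n : nat) (P : list nat -> bool) : nat := length (filter P (words q n)).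

Fixpoint lz (w : list nat) : nat :=
  match w with [] => 0%nat | a :: w' => if Nat.eqb a 0 then S (lz w') else 0%nat end.

Lemma list_sum_zero (A : Type) (s : list A) : list_sum (map (fun _ => 0%nat) s) = 0%nat.
Proof. induction s; simpl; auto. Qed.

Lemma cnt_flat (P : list nat -> bool) (s : list nat) (l : list (list nat)) :
  length (filter P (flat_map (fun w => map (fun a => a :: w) s) l)) =
  list_sum (map (fun a => length (filter (fun w => P (a :: w)) l)) s).
Proof.
  induction l as [|w l IH]; simpl.
  - rewrite list_sum_zero; auto.
  - rewrite filter_app, length_app, IH. clear IH.
    induction s as [|a s IHs]; simpl; auto.
    destruct (P (a :: w)); simpl; rewrite <- IHs; lia.
Qed.

Lemma list_sum_const (g : nat -> nat) (v : nat) (s : list nat) :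
  (forall a, In a s -> g a = v) -> list_sum (map g s) = (length s * v)%nat.
Proof.
  induction s as [|a s IH]; simpl; intros H.
  - lia.
  - rewrite H by auto. rewrite IH by auto. lia.
Qed.

Lemma cnt_S_split (q' n : nat) (P Q : list nat -> bool) :
  (forall a w, (1 <= a)%nat -> P (a :: w) = Q w) ->
  cnt (S q') (S n) P = (cnt (S q') n (fun w => P (0%nat :: w)) + q' * cnt (S q') n Q)%nat.
Proof.
  intros H. unfold cnt. change (words (S q') (S n)) with (flat_map (fun w => map (fun a => a :: w) (seq 0 (S q'))) (words (S q') n)). rewrite cnt_flat. simpl seq. simpl map.
  simpl list_sum. f_equal.
  rewrite (list_sum_const _ (length (filter Q (words (S q') n)))).
  - rewrite length_seq. auto.
  - intros a Ha. apply in_seq in Ha. f_equal. apply filter_ext. intros w. apply H. lia.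
Qed.

Lemma cnt_ext (q n : nat) (P Q : list nat -> bool) :
  (forall w, P w = Q w) -> cnt q n P = cnt q n Q.
Proof. intros H. unfold cnt. f_equal. apply filter_ext. auto. Qed.

Lemma cnt_false (q n : nat) : cnt q n (fun _ => false) = 0%nat.
Proof. unfold cnt. induction (words q n); simpl; auto. Qed.

Lemma cnt_true (q' n : nat) : cnt (S q') n (fun _ => true) = (S q' ^ n)%nat.
Proof.
  induction n.
  - reflexivity.
  - rewrite (cnt_S_split q' n _ (fun _ => true)) by auto. rewrite IHn. simpl. lia.
Qed.

Lemma words_length (q n : nat) w : In w (words q n) -> length w = n.
Proof.
  revert w; induction n; simpl; intros w H.
  - destruct H as [<-|[]]; auto.
  - apply in_flat_map in H. destruct H as [w' [H1 H2]].
    apply in_map_iff in H2. destruct H2 as [a [<- _]]. simpl. rewrite (IHn w'); auto.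
Qed.

Lemma forallb_map' (A B : Type) (f : B -> bool) (g : A -> B) (s : list A) :
  forallb f (map g s) = forallb (fun x => f (g x)) s.
Proof. induction s; simpl; congruence. Qed.

Lemma existsb_map' (A B : Type) (f : B -> bool) (g : A -> B) (s : list A) :
  existsb f (map g s) = existsb (fun x => f (g x)) s.
Proof. induction s; simpl; congruence. Qed.

Lemma forall_zero m : forall l, forallb (fun j => Nat.eqb (nth j l 1%nat) 0) (seq 0 m) = Nat.leb m (lz l).
Proof.
  induction m as [|m IH]; intros l; simpl; auto.
  rewrite <- seq_shift, forallb_map'.
  destruct l as [|a l]; simpl; auto.
  destruct (Nat.eqb a 0); simpl; auto.
Qed.

Lemma lz_le w : (lz w <= length w)%nat.
Proof. induction w as [|a w IH]; simpl; auto. destruct (Nat.eqb a 0); lia. Qed.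

Lemma hzr_gt k w : (length w < k)%nat -> has_zero_run k w = false.
Proof.
  intros H. unfold has_zero_run. replace (length w - k + 1)%nat with 1%nat by lia.
  simpl. rewrite forall_zero. rewrite Bool.orb_false_r. apply Nat.leb_gt.
  pose proof (lz_le w). lia.
Qed.

Lemma hzr_cons k' a w : has_zero_run (S k') (a :: w) =
  ((Nat.eqb a 0) && Nat.leb k' (lz w)) || has_zero_run (S k') w.
Proof.
  assert (W : forallb (fun j => Nat.eqb (nth (0 + j) (a :: w) 1%nat) 0) (seq 0 (S k'))
            = (Nat.eqb a 0) && Nat.leb k' (lz w)).
  { simpl plus. rewrite forall_zero. simpl. destruct (Nat.eqb a 0); auto. }
  destruct (le_lt_dec (length w) k') as [Hl|Hl].
  - rewrite (hzr_gt (S k') w) by lia. rewrite Bool.orb_false_r.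
    unfold has_zero_run. simpl length.
    replace (S (length w) - S k' + 1)%nat with 1%nat by lia.
    simpl seq. simpl existsb. rewrite Bool.orb_false_r. exact W.
  - unfold has_zero_run. simpl length.
    replace (S (length w) - S k' + 1)%nat with (S (S (length w - S k')))%nat by lia.
    replace (length w - S k' + 1)%nat with (S (length w - S k'))%nat by lia.
    change (seq 0 (S (S (length w - S k')))) with (0 :: seq 1 (S (length w - S k')))%nat.
    rewrite <- seq_shift. cbn [existsb]. rewrite existsb_map'. f_equal. exact W.
Qed.

Lemma run_of_lz k' w : (S k' <= lz w)%nat -> has_zero_run (S k') w = true.
Proof.
  revert k'; induction w as [|a w IH]; intros k' H; simpl in H; [lia|].
  rewrite hzr_cons. destruct (Nat.eqb a 0); [|lia].
  simpl. apply Nat.leb_le in H. apply Bool.orb_true_iff. left. apply Nat.leb_le. apply Nat.leb_le in H. lia.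
Qed.

Lemma cnt_split q n P Q : cnt q n P = cnt q n (fun w => P w && Q w) + cnt q n (fun w => P w && negb (Q w)).
Proof.
  unfold cnt. induction (words q n) as [|w l IH]; simpl; auto.
  destruct (P w), (Q w); simpl; rewrite IH; lia.
Qed.

Definition A q' k' n := cnt (S q') n (fun w => negb (has_zero_run (S k') w)).
Definition H q' k' n t := cnt (S q') n (fun w => negb (has_zero_run (S k') w) && Nat.eqb (lz w) t).

Lemma A_small q' k' n : n < S k' -> A q' k' n = S q' ^ n.
Proof.
  intros Hn. unfold A. rewrite <- cnt_true. unfold cnt. f_equal. apply filter_ext_in.
  intros w Hw. apply words_length in Hw. rewrite hzr_gt by lia. reflexivity.
Qed.

Lemma H_S0 q' k' n : H q' k' (S n) 0 = q' * A q' k' n.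
Proof.
  unfold H. rewrite (cnt_S_split q' n _ (fun w => negb (has_zero_run (S k') w))).
  - rewrite (cnt_ext _ _ _ (fun _ => false)), cnt_false; [reflexivity|].
    intros w. simpl lz. simpl. rewrite Bool.andb_false_r. reflexivity.
  - intros a w Ha. rewrite hzr_cons. simpl lz.
    destruct a; [lia|]. simpl. destruct (has_zero_run (S k') w); reflexivity.
Qed.

Lemma H_SS q' k' n t : H q' k' (S n) (S t) = if Nat.ltb t k' then H q' k' n t else 0.
Proof.
  unfold H. rewrite (cnt_S_split q' n _ (fun _ => false)).
  - rewrite cnt_false, Nat.mul_0_r, Nat.add_0_r.
    destruct (Nat.ltb t k') eqn:E.
    + apply cnt_ext. intros w. rewrite hzr_cons. simpl.
      destruct (Nat.eqb (lz w) t) eqn:E2.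
      * apply Nat.eqb_eq in E2. apply Nat.ltb_lt in E. subst.
        replace (Nat.leb k' (lz w)) with false by (symmetry; apply Nat.leb_gt; lia).
        simpl. rewrite !Bool.andb_true_r. reflexivity.
      * rewrite !Bool.andb_false_r. reflexivity.
    + rewrite (cnt_ext _ _ _ (fun _ => false)), cnt_false; [reflexivity|].
      intros w. rewrite hzr_cons. simpl.
      destruct (Nat.eqb (lz w) t) eqn:E2.
      * apply Nat.eqb_eq in E2. apply Nat.ltb_ge in E. subst.
        replace (Nat.leb k' (lz w)) with true by (symmetry; apply Nat.leb_le; lia).
        reflexivity.
      * rewrite !Bool.andb_false_r. reflexivity.
  - intros a w Ha. destruct a; [lia|]. simpl lz. simpl. rewrite Bool.andb_false_r. reflexivity.
Qed.

Lemma A_S q' k' n : A q' k' (S n) + H q' k' n k' = S q' * A q' k' n.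
Proof.
  unfold A. rewrite (cnt_S_split q' n _ (fun w => negb (has_zero_run (S k') w))).
  2:{ intros a w Ha. rewrite hzr_cons. destruct a; [lia|]. reflexivity. }
  pose proof (cnt_split (S q') n (fun w => negb (has_zero_run (S k') w)) (fun w => Nat.eqb (lz w) k')) as Sp.
  cbv beta in Sp. fold (H q' k' n k') in Sp.
  assert (E : cnt (S q') n (fun w => negb (has_zero_run (S k') (0 :: w))) =
              cnt (S q') n (fun w => negb (has_zero_run (S k') w) && negb (Nat.eqb (lz w) k'))).
  { apply cnt_ext. intros w. rewrite hzr_cons. simpl.
    destruct (has_zero_run (S k') w) eqn:R; simpl; [rewrite Bool.orb_true_r; reflexivity|].
    rewrite Bool.orb_false_r.
    assert (lz w <= k'). { destruct (le_lt_dec (lz w) k'); auto. rewrite run_of_lz in R by lia. discriminate. }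
    destruct (Nat.eqb (lz w) k') eqn:E3.
    - apply Nat.eqb_eq in E3. rewrite E3, Nat.leb_refl. reflexivity.
    - apply Nat.eqb_neq in E3. replace (Nat.leb k' (lz w)) with false by (symmetry; apply Nat.leb_gt; lia). reflexivity. }
  rewrite E. lia.
Qed.

Lemma H_shift q' k' m j : j <= k' -> H q' k' (j + m) j = H q' k' m 0.
Proof.
  induction j; intros Hj; simpl; auto.
  rewrite H_SS. replace (Nat.ltb j k') with true by (symmetry; apply Nat.ltb_lt; lia).
  apply IHj. lia.
Qed.

Lemma H_00 q' k' : H q' k' 0 0 = 1.
Proof. reflexivity. Qed.

Lemma H_big q' k' p : H q' k' (S k' + p) k' = q' * A q' k' p.
Proof.
  replace (S k' + p) with (k' + S p) by lia. rewrite H_shift by lia. apply H_S0.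
Qed.

Lemma H_kk q' k' : H q' k' k' k' = 1.
Proof. pose proof (H_shift q' k' 0 k' (le_n _)) as E. rewrite Nat.add_0_r in E. rewrite E. reflexivity. Qed.

Lemma a_q_A q' k' n : a_q (S q') n (Z.of_nat (S k')) = A q' k' n.
Proof.
  unfold a_q, A, cnt. f_equal. apply filter_ext. intros w. unfold is_RLL.
  rewrite Nat2Z.id. destruct (Z.ltb (Z.of_nat (length w)) (Z.of_nat (S k'))) eqn:E; simpl; auto.
  apply Z.ltb_lt in E. rewrite hzr_gt by lia. reflexivity.
Qed.
Open Scope R_scope.

Lemma exp_le x y : x <= y -> exp x <= exp y.
Proof. intros [H|H]; [left; apply exp_increasing; auto| subst; lra]. Qed.

Lemma exp_pow_n a n : exp a ^ n = exp (INR n * a).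
Proof.
  induction n; simpl pow. { simpl. rewrite Rmult_0_l, exp_0. reflexivity. }
  rewrite IHn, <- exp_plus. f_equal. rewrite S_INR. ring.
Qed.

Lemma pow_dec a m n : 0 <= a <= 1 -> (m <= n)%nat -> a ^ n <= a ^ m.
Proof.
  intros Ha Hmn. induction Hmn; [lra|]. simpl. pose proof (pow_le a m0 (proj1 Ha)). nra.
Qed.

Lemma bern x m : 0 <= x <= 1 -> 1 - INR m * x <= (1 - x) ^ m.
Proof.
  intros Hx. induction m; simpl pow. { simpl; lra. }
  rewrite S_INR. pose proof (pos_INR m). nra.
Qed.

Definition Hyp (f : nat -> R) (k : nat) (c e : R) : Prop :=
  (forall n, (n < k)%nat -> f n = 1) /\ f k = 1 - e /\
  (forall p, f (S (k + p)%nat) = f (k + p)%nat - c * f p) /\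
  (forall n, 0 <= f n) /\ 0 <= c /\ 0 <= e /\ (1 <= k)%nat.

Lemma mono f k c e : Hyp f k c e -> forall n, f (S n) <= f n.
Proof.
  intros [h0 [h1 [h2 [hp [hc [he hk]]]]]] n.
  destruct (lt_dec (S n) k). { rewrite !h0 by lia. lra. }
  destruct (Nat.eq_dec (S n) k) as [E|E].
  { rewrite E, h1, (h0 n) by lia. lra. }
  replace n with (k + (n - k))%nat by lia. rewrite h2. specialize (hp (n-k)%nat). nra.
Qed.

Lemma mono2 f k c e : Hyp f k c e -> forall m n, (m <= n)%nat -> f n <= f m.
Proof.
  intros H m n Hmn. induction Hmn; [lra|]. pose proof (mono f k c e H m0). lra.
Qed.

Lemma upper f k c e : Hyp f k c e -> c <= 1 -> forall n, f n <= (1 - c) ^ (n - k).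
Proof.
  intros H Hc1. assert (H' := H). destruct H' as [h0 [h1 [h2 [hp [hc [he hk]]]]]].
  assert (forall p, f (k + p)%nat <= (1 - c) ^ p).
  { induction p. { rewrite Nat.add_0_r, h1. simpl. lra. }
    replace (k + S p)%nat with (S (k + p)) by lia. rewrite h2.
    pose proof (mono2 f k c e H p (k + p)%nat ltac:(lia)). simpl pow.
    pose proof (hp (k+p)%nat). nra. }
  intros n. destruct (lt_dec n k). { rewrite h0 by lia. replace (n - k)%nat with 0%nat by lia. simpl; lra. }
  replace n with (k + (n - k))%nat at 1 by lia. auto.
Qed.

Lemma iter_low f r : 0 <= r -> forall p j, (forall m, (p <= m < p + j)%nat -> r * f m <= f (S m)) ->
  (forall n, 0 <= f n) -> r ^ j * f p <= f (p + j)%nat.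
Proof.
  intros Hr p j. induction j; intros Hm hp. { rewrite Nat.add_0_r. simpl. lra. }
  replace (p + S j)%nat with (S (p + j)) by lia.
  pose proof (Hm (p + j)%nat ltac:(lia)).
  assert (r ^ j * f p <= f (p + j)%nat) by (apply IHj; auto; intros; apply Hm; lia).
  simpl pow. nra.
Qed.

Lemma step1 f k c e : Hyp f k c e -> e <= 2 * c -> 2 * c * INR k <= 1/2 -> c <= 1/2 ->
  forall n, (1 - 2 * c) * f n <= f (S n).
Proof.
  intros H He2 Hck Hc2. assert (H' := H). destruct H' as [h0 [h1 [h2 [hp [hc [he hk]]]]]].
  assert (forall N n, (n <= N)%nat -> (1 - 2 * c) * f n <= f (S n)).
  { induction N; intros n Hn.
    - destruct (lt_dec (S n) k). { rewrite !h0 by lia. lra. }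
      replace n with 0%nat by lia. replace 1%nat with k by lia. rewrite h1, h0 by lia. lra.
    - destruct (Nat.le_gt_cases n N) as [L|L]; [auto|]. replace n with (S N) by lia. clear n Hn L.
      destruct (lt_dec (S (S N)) k). { rewrite !h0 by lia. lra. }
      destruct (Nat.eq_dec (S (S N)) k) as [E|E].
      { rewrite E, h1, (h0 (S N)) by lia. lra. }
      set (p := (S N - k)%nat).
      replace (S N) with (k + p)%nat by lia. rewrite h2.
      assert (Hi : (1 - 2*c) ^ k * f p <= f (p + k)%nat).
      { apply iter_low; auto; [lra|]. intros m Hm. apply IHN. lia. }
      pose proof (bern (2 * c) k ltac:(lra)).
      replace (p + k)%nat with (k + p)%nat in Hi by lia.
      pose proof (hp p). pose proof (hp (k + p)%nat).
      assert (f p <= 2 * f (k + p)%nat) by nra. nra. }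
  intros n; apply (H0 n n); lia.
Qed.

Lemma step2 f k c e : Hyp f k c e -> e <= 2 * c -> 2 * c * INR k <= 1/2 -> c <= 1/2 ->
  forall p, (1 - 2 * c * INR k) * f p <= f (k + p)%nat.
Proof.
  intros H He2 Hck Hc2 p. assert (H' := H). destruct H' as [h0 [h1 [h2 [hp [hc [he hk]]]]]].
  assert (Hi : (1 - 2*c) ^ k * f p <= f (p + k)%nat).
  { apply iter_low; auto; [lra|]. intros m Hm. apply (step1 f k c e); auto. }
  pose proof (bern (2 * c) k ltac:(lra)). pose proof (hp p).
  replace (p + k)%nat with (k + p)%nat in Hi by lia. nra.
Qed.

Lemma lower f k c e : Hyp f k c e -> e <= 2 * c -> 2 * c * INR k <= 1/2 -> c <= 1/4 ->
  forall n, (1 - e) * (1 - c / (1 - 2 * c * INR k)) ^ (n - k) <= f n.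
Proof.
  intros H He2 Hck Hc4. assert (H' := H). destruct H' as [h0 [h1 [h2 [hp [hc [he hk]]]]]].
  set (D := 1 - 2 * c * INR k). assert (HD : 1/2 <= D) by (unfold D; lra).
  set (d := c / D).
  assert (Hd : 0 <= d <= 1/2). { unfold d. split. unfold Rdiv. apply Rmult_le_pos; [lra|]. left; apply Rinv_0_lt_compat; lra.
    apply Rmult_le_reg_r with D; [lra|]. unfold Rdiv. rewrite Rmult_assoc, Rinv_l by lra. nra. }
  assert (forall p, (1 - e) * (1 - d) ^ p <= f (k + p)%nat).
  { induction p. { rewrite Nat.add_0_r, h1. simpl. lra. }
    replace (k + S p)%nat with (S (k + p)) by lia. rewrite h2.
    pose proof (step2 f k c e H He2 Hck ltac:(lra) p). fold D in H0.
    assert (c * f p <= d * f (k + p)%nat).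
    { unfold d. pose proof (hp p). apply Rmult_le_reg_r with D; [lra|].
      replace (c / D * f (k + p)%nat * D) with (c * f (k+p)%nat) by (field; lra). nra. }
    simpl pow. pose proof (hp (k+p)%nat). pose proof (pow_le (1 - d) p ltac:(lra)).
    assert (0 <= 1 - e) by (pose proof (hp k); lra). nra. }
  intros n. destruct (lt_dec n k).
  { rewrite h0 by lia. replace (n - k)%nat with 0%nat by lia. simpl. lra. }
  replace n with (k + (n - k))%nat at 2 by lia. apply H0.
Qed.

Lemma exp_upper y : 0 <= y <= 1/2 -> exp y <= 1 + 2 * y.
Proof.
  intros Hy. pose proof (exp_ineq1_le (- y)). pose proof (exp_pos y).
  assert (exp y * exp (- y) = 1) by (rewrite <- exp_plus; replace (y + - y) with 0 by ring; apply exp_0).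
  assert (exp y * (1 - y) <= 1) by nra.
  assert (exp y <= 2) by nra. nra.
Qed.

Lemma ratio_bound f k c e M x n : Hyp f k c e -> 0 <= e <= x -> c <= x -> c * INR k <= x ->
  e <= 2 * c -> 0 <= x <= 1/6 -> c * INR n <= M ->
  Rabs (f n * exp (c * INR n) - 1) <= (3 + 6 * M) * x.
Proof.
  intros H He Hc Hck He2 Hx HM. assert (H' := H). destruct H' as [h0 [h1 [h2 [hp [hc [he hk]]]]]].
  pose proof (pos_INR n) as Hn. pose proof (pos_INR k) as Hk.
  assert (HM0 : 0 <= M) by nra.
  pose proof (exp_pos (c * INR n)) as Ep.
  assert (Up : f n * exp (c * INR n) <= 1 + 2 * x).
  { pose proof (upper f k c e H ltac:(lra) n) as U.
    assert (A1 : (1 - c) ^ (n - k) <= exp (- c) ^ (n - k)).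
    { apply pow_incr. pose proof (exp_ineq1_le (- c)). lra. }
    rewrite exp_pow_n in A1.
    assert (A2 : INR n - INR k <= INR (n - k)).
    { destruct (le_lt_dec k n). rewrite minus_INR by auto. lra.
      replace (n - k)%nat with 0%nat by lia. apply lt_INR in l. simpl. lra. }
    assert (A3 : exp (INR (n - k) * - c) * exp (c * INR n) <= exp (c * INR k)).
    { rewrite <- exp_plus. apply exp_le. nra. }
    pose proof (exp_upper (c * INR k) ltac:(nra)).
    assert (f n * exp (c * INR n) <= exp (INR (n - k) * - c) * exp (c * INR n)).
    { apply Rmult_le_compat_r; lra. }
    lra. }
  assert (Lo : 1 - x - 6 * M * x <= f n * exp (c * INR n)).
  { pose proof (lower f k c e H He2 ltac:(nra) ltac:(lra) n) as L.
    set (D := 1 - 2 * c * INR k) in L. assert (HD : 2/3 <= D) by (unfold D; nra).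
    set (g := c / (D - c)).
    assert (Hg : g * (D - c) = c) by (unfold g; field; lra).
    assert (Hg0 : 0 <= g) by (unfold g; unfold Rdiv; apply Rmult_le_pos; [lra|left; apply Rinv_0_lt_compat; lra]).
    assert (Hd : (1 - c / D) * D = D - c) by (field; lra).
    assert (Hd0 : 0 <= 1 - c / D <= 1).
    { split. apply Rmult_le_reg_r with D; [lra|]. rewrite Hd. lra.
      apply Rmult_le_reg_r with D; [lra|]. rewrite Hd. lra. }
    assert (E1 : exp (- g) <= 1 - c / D).
    { pose proof (exp_ineq1_le g). pose proof (exp_pos (- g)).
      assert (exp g * exp (- g) = 1) by (rewrite <- exp_plus; replace (g + - g) with 0 by ring; apply exp_0).
      assert (exp (- g) * (1 + g) <= 1) by nra.
      apply Rmult_le_reg_r with D; [lra|]. rewrite Hd. nra. }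
    assert (E2 : exp (- g) ^ n <= (1 - c / D) ^ (n - k)).
    { apply Rle_trans with ((1 - c / D) ^ n). apply pow_incr. pose proof (exp_pos (- g)). lra.
      apply pow_dec; [lra|lia]. }
    rewrite exp_pow_n in E2.
    assert (E3 : exp (INR n * - g) * exp (c * INR n) = exp (- ((g - c) * INR n))).
    { rewrite <- exp_plus. f_equal. ring. }
    assert (Hgc : g - c <= 6 * x * c).
    { assert (c <= (c + 6 * x * c) * (D - c)).
      { assert (Hu : 2 * c * INR k + c <= 3 * x) by nra.
        assert (Hu2 : 1 <= (1 + 6 * x) * (1 - (2 * c * INR k + c))).
        { assert ((1 + 6 * x) * (1 - 3 * x) <= (1 + 6 * x) * (1 - (2 * c * INR k + c))) by nra. nra. }
        unfold D. replace ((c + 6 * x * c) * (1 - 2 * c * INR k - c)) with (c * ((1 + 6 * x) * (1 - (2 * c * INR k + c)))) by ring.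
        nra. }
      assert ((g - (c + 6 * x * c)) * (D - c) <= 0) by nra. nra. }
    pose proof (exp_ineq1_le (- ((g - c) * INR n))).
    assert (1 - 6 * x * M <= 1 - (g - c) * INR n) by nra.
    assert (0 <= 1 - e) by lra.
    assert (H5 : (1 - e) * exp (INR n * - g) * exp (c * INR n) <= f n * exp (c * INR n)).
    { apply Rmult_le_compat_r; [lra|]. pose proof (exp_pos (INR n * - g)). nra. }
    rewrite Rmult_assoc, E3 in H5.
    assert (1 - 6 * x * M <= exp (- ((g - c) * INR n))) by lra.
    assert ((1 - e) * (1 - 6 * x * M) <= (1 - e) * exp (- ((g - c) * INR n))) by (apply Rmult_le_compat_l; lra).
    assert (0 <= e * (6 * x * M)) by (apply Rmult_le_pos; [lra|]; nra).
    nra. }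
  apply Rabs_le. nra.
Qed.
Open Scope R_scope.

Definition fk (q' k' : nat) (n : nat) : R := INR (A q' k' n) / INR (S q') ^ n.

Lemma Hyp_fk q' k' : (1 <= q')%nat ->
  Hyp (fk q' k') (S k') ((INR (S q') - 1) / INR (S q') ^ (S (S k'))) (1 / INR (S q') ^ (S k')).
Proof.
  intros hq. set (Q := INR (S q')).
  assert (HQ : 2 <= Q) by (unfold Q; rewrite S_INR; apply le_INR in hq; simpl in hq; lra).
  assert (Qp : forall m, 0 < Q ^ m) by (intros; apply pow_lt; lra).
  assert (Rec : forall n, INR (A q' k' (S n)) = Q * INR (A q' k' n) - INR (H q' k' n k')).
  { intros n. pose proof (A_S q' k' n) as E. apply (f_equal INR) in E.
    rewrite plus_INR, mult_INR in E. unfold Q. lra. }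
  repeat split.
  - intros n Hn. unfold fk. rewrite A_small by lia. rewrite pow_INR. fold Q. unfold Rdiv; apply Rinv_r, Rgt_not_eq, Qp.
  - unfold fk. rewrite Rec, H_kk, A_small by lia. rewrite pow_INR. fold Q. simpl pow. change (INR 1) with 1.
    assert (Hne : Q * Q ^ k' <> 0) by (apply Rgt_not_eq, Rmult_lt_0_compat; [lra|apply Qp]).
    field. split; [apply Rgt_not_eq, Qp | lra].
  - intros p. unfold fk. rewrite Rec. replace (S k' + p)%nat with (S k' + p)%nat by reflexivity.
    rewrite H_big, mult_INR. fold Q.
    replace (INR q') with (Q - 1) by (unfold Q; rewrite S_INR; ring).
    replace (Q ^ S (S k' + p)) with (Q * Q ^ S k' * Q ^ p) by (rewrite Rmult_assoc, <- pow_add; reflexivity).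
    replace (Q ^ (S k' + p)) with (Q ^ S k' * Q ^ p) by (rewrite <- pow_add; reflexivity).
    replace (Q ^ S (S k')) with (Q * Q ^ S k') by reflexivity.
    pose proof (Qp (S k')). pose proof (Qp p).
    field. repeat split; apply Rgt_not_eq; auto; lra.
  - intros n. unfold fk. apply Rmult_le_pos. apply pos_INR. left; apply Rinv_0_lt_compat, Qp.
  - unfold Rdiv. apply Rmult_le_pos. lra. left; apply Rinv_0_lt_compat, Qp.
  - unfold Rdiv. apply Rmult_le_pos. lra. left; apply Rinv_0_lt_compat, Qp.
  - lia.
Qed.

Lemma sq_le_pow2 k : (k * k <= 2 * 2 ^ k)%nat.
Proof.
  induction k as [|k IH]; [simpl; lia|].
  destruct (Nat.le_gt_cases k 2) as [Hk|Hk].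
  - destruct k as [|[|[|k]]]; simpl; lia.
  - rewrite Nat.pow_succ_r'. nia.
Qed.

Lemma small_bounds q k : (2 <= q)%nat -> (1 <= k)%nat ->
  let Q := INR q in let c := (Q - 1) / Q ^ S k in let e := 1 / Q ^ k in
  e <= 2 / INR k /\ c <= 2 / INR k /\ c * INR k <= 2 / INR k /\ e <= 2 * c /\ 0 <= c /\ 0 <= e.
Proof.
  intros hq hk Q c e.
  assert (HQ : 2 <= Q) by (unfold Q; apply le_INR in hq; simpl in hq; lra).
  assert (Hkk : INR k * INR k <= 2 * Q ^ k).
  { assert (Hkq : (k * k <= 2 * q ^ k)%nat).
    { pose proof (sq_le_pow2 k). pose proof (Nat.pow_le_mono_l 2 q k hq). lia. }
    apply le_INR in Hkq. rewrite mult_INR, mult_INR, pow_INR in Hkq. simpl in Hkq. unfold Q. lra. }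
  assert (K1 : 1 <= INR k) by (apply le_INR in hk; simpl in hk; lra).
  assert (Qk : 0 < Q ^ k) by (apply pow_lt; lra).
  assert (Ec : c = (Q - 1) / Q * e) by (unfold c, e; simpl pow; field; lra).
  assert (He : e * Q ^ k = 1) by (unfold e; field; lra).
  assert (He0 : 0 < e) by (unfold e; unfold Rdiv; rewrite Rmult_1_l; apply Rinv_0_lt_compat; lra).
  assert (Hq1 : 1/2 <= (Q - 1) / Q <= 1).
  { replace ((Q - 1) / Q) with (1 - 1 / Q) by (field; lra).
    assert (0 < 1 / Q <= 1/2).
    { split. unfold Rdiv; rewrite Rmult_1_l; apply Rinv_0_lt_compat; lra.
      apply Rmult_le_reg_r with Q; [lra|]. replace (1 / Q * Q) with 1 by (field; lra). lra. }
    lra. }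
  assert (Hek : e * INR k <= 2 / INR k).
  { apply Rmult_le_reg_r with (INR k * Q ^ k); [nra|].
    replace (2 / INR k * (INR k * Q ^ k)) with (2 * Q ^ k) by (field; lra).
    replace (e * INR k * (INR k * Q ^ k)) with (INR k * INR k * (e * Q ^ k)) by ring.
    rewrite He. lra. }
  rewrite Ec. set (t := 2 / INR k) in *. set (r := (Q - 1) / Q) in *.
  assert (e <= e * INR k) by nra.
  repeat split; nra.
Qed.

Lemma IZR_le_INR_to_nat u : IZR u <= INR (Z.to_nat u).
Proof.
  destruct (Z.le_gt_cases 0 u) as [Hu|Hu].
  - rewrite INR_IZR_INZ, Z2Nat.id by auto. lra.
  - replace (Z.to_nat u) with 0%nat by lia. simpl. apply IZR_lt in Hu. simpl in Hu. lra.
Qed.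

Lemma Rceil_ge x : x <= IZR (Rceil x).
Proof.
  unfold Rceil. destruct (archimed (- x)) as [H1 H2].
  rewrite opp_IZR, minus_IZR. simpl. lra.
Qed.

Theorem theorem1 (q : nat) (z : Z) (hq : (2 <= q)%nat) :
  Un_cv
    (fun n : nat =>
       INR (a_q q n (Rceil (logq q (INR n)) + z)%Z) /
       (INR q ^ n *
        exp (- (INR q - 1) *
             Rpower (INR q)
               ((logq q (INR n) - IZR (Rceil (logq q (INR n)))) - IZR z - 1))))
    1.
Proof.
  intros eps Heps.
  set (Q := INR q).
  assert (HQ : 2 <= Q) by (unfold Q; apply le_INR in hq; simpl in hq; lra).
  assert (lnQ : 0 < ln Q) by (rewrite <- ln_1; apply ln_increasing; lra).
  set (M := (Q - 1) * Rpower Q (- IZR z - 1)).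
  assert (HM : 0 <= M) by (unfold M, Rpower; pose proof (exp_pos ((- IZR z - 1) * ln Q)); nra).
  destruct (archimed ((3 + 6 * M) * 2 / eps)) as [Ha _].
  set (k0 := (12 + Z.to_nat (up ((3 + 6 * M) * 2 / eps)))%nat).
  assert (Hk0 : (3 + 6 * M) * 2 / eps < INR k0).
  { unfold k0. rewrite plus_INR. pose proof (IZR_le_INR_to_nat (up ((3 + 6 * M) * 2 / eps))).
    replace (INR 12) with 12 by (simpl; ring). lra. }
  assert (Hk012 : 12 <= INR k0).
  { unfold k0. rewrite plus_INR. pose proof (pos_INR (Z.to_nat (up ((3 + 6 * M) * 2 / eps)))).
    replace (INR 12) with 12 by (simpl; ring). lra. }
  set (m := Z.to_nat (Z.of_nat k0 - z)).
  exists (q ^ m)%nat. intros n Hn.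
  assert (Hnm : Q ^ m <= INR n) by (unfold Q; rewrite <- pow_INR; apply le_INR; lia).
  assert (Qm1 : 1 <= Q ^ m) by (apply pow_R1_Rle; lra).
  assert (Hn0 : 0 < INR n) by lra.
  set (L := logq q (INR n)).
  assert (HL : INR m <= L).
  { unfold L, logq. fold Q. apply Rmult_le_reg_r with (ln Q); [lra|].
    replace (ln (INR n) / ln Q * ln Q) with (ln (INR n)) by (field; lra).
    rewrite <- ln_pow by lra. destruct Hnm as [Hlt|Heq]; [left; apply ln_increasing; auto; apply pow_lt; lra|rewrite Heq; lra]. }
  pose proof (IZR_le_INR_to_nat (Z.of_nat k0 - z)) as Hm. fold m in Hm.
  set (K := Rceil L).
  pose proof (Rceil_ge L) as HK. fold K in HK.
  assert (HKz : (Z.of_nat k0 <= K + z)%Z).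
  { apply le_IZR. rewrite plus_IZR. rewrite minus_IZR in Hm. lra. }
  set (k' := (Z.to_nat (K + z) - 1)%nat).
  assert (Hk' : Z.of_nat (S k') = (K + z)%Z) by (unfold k'; lia).
  assert (Hk0k : (k0 <= S k')%nat) by lia.
  destruct q as [|q']; [lia|].
  unfold R_dist. rewrite <- Hk', a_q_A.
  assert (HIk : IZR K + IZR z = INR (S k')) by (rewrite <- plus_IZR, <- Hk', <- INR_IZR_INZ; reflexivity).
  set (c := (Q - 1) / Q ^ S (S k')).
  assert (Qp : forall j, 0 < Q ^ j) by (intros; apply pow_lt; lra).
  assert (HR : Rpower Q (L - IZR K - IZR z - 1) = INR n / Q ^ S (S k')).
  { replace (L - IZR K - IZR z - 1) with (L + - INR (S (S k'))) by (rewrite (S_INR (S k')); lra).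
    rewrite Rpower_plus, Rpower_Ropp, Rpower_pow by lra.
    unfold Rpower at 1. unfold L, logq. fold Q.
    replace (ln (INR n) / ln Q * ln Q) with (ln (INR n)) by (field; lra).
    rewrite exp_ln by lra. reflexivity. }
  assert (Hcn : c * INR n <= M).
  { unfold M. replace (c * INR n) with ((Q - 1) * Rpower Q (L - IZR K - IZR z - 1))
      by (rewrite HR; unfold c; field; apply Rgt_not_eq, Qp).
    apply Rmult_le_compat_l; [lra|]. apply Rle_Rpower; lra. }
  fold Q. fold L. fold K.
  rewrite HR.
  replace (INR (A q' k' n) / (Q ^ n * exp (- (Q - 1) * (INR n / Q ^ S (S k')))) - 1)
    with (fk q' k' n * exp (c * INR n) - 1).
  2:{ unfold fk, c. fold Q. replace (- (Q - 1) * (INR n / Q ^ S (S k'))) with (- ((Q - 1) / Q ^ S (S k') * INR n))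
        by (field; apply Rgt_not_eq, Qp).
      rewrite exp_Ropp. field. split; [apply Rgt_not_eq, exp_pos | apply Rgt_not_eq, Qp]. }
  assert (hq' : (1 <= q')%nat) by lia.
  pose proof (Hyp_fk q' k' hq') as HH. fold Q in HH. fold c in HH.
  destruct (small_bounds (S q') (S k') hq ltac:(lia)) as [B1 [B2 [B3 [B4 [B5 B6]]]]].
  fold Q in B1, B2, B3, B4, B5, B6. fold c in B1, B2, B3, B4, B5, B6.
  assert (Hx : 2 / INR (S k') <= 2 / INR k0).
  { apply Rmult_le_compat_l; [lra|]. apply Rinv_le_contravar; [lra|]. apply le_INR; auto. }
  assert (Hx6 : 2 / INR k0 <= 1/6).
  { apply Rmult_le_reg_r with (INR k0); [lra|]. replace (2 / INR k0 * INR k0) with 2 by (field; lra). lra. }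
  assert (Hx0 : 0 <= 2 / INR (S k')).
  { unfold Rdiv. apply Rmult_le_pos; [lra|]. left; apply Rinv_0_lt_compat, lt_0_INR; lia. }
  pose proof (ratio_bound (fk q' k') (S k') c (1 / Q ^ S k') M (2 / INR (S k')) n HH
    ltac:(lra) B2 B3 B4 ltac:(lra) Hcn) as RB.
  assert (Heps2 : (3 + 6 * M) * (2 / INR k0) < eps).
  { apply Rmult_lt_reg_r with (INR k0); [lra|].
    replace ((3 + 6 * M) * (2 / INR k0) * INR k0) with ((3 + 6 * M) * 2) by (field; lra).
    assert ((3 + 6 * M) * 2 / eps * eps = (3 + 6 * M) * 2) by (field; lra).
    nra. }
  assert ((3 + 6 * M) * (2 / INR (S k')) <= (3 + 6 * M) * (2 / INR k0)) by (apply Rmult_le_compat_l; lra).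
  lra.
Qed.
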